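(* Let $k\ge3$. Let $C$ and $C'$ be cycles of length $2k$ with $E(C)\cap E(C')=\emptyset$ and $V(C)\cap V(C')\neq\emptyset$. If $H:=C\cup C'$ has girth at least $2k-2$, then $H$ can be decomposed into two paths, each of length $2k$.
   Context: Graphs are finite and simple; length = number of edges; girth = length of a shortest cycle. A decomposition of a graph is a set of subgraphs whose edge sets partition its edge set. *)

(* Defs.v *)
(* Simple graphs on a finite vertex type T are given by
   their edge sets: an edge is an unordered pair, i.e. a 2-element {set T}. *)
From mathcomp Require Import all_boot.
Set Implicit Arguments. Unset Strict Implicit. Unset Printing Implicit Defensive.

Section Graphs.
Variable T : finType.

Definition cycle_edges (c : seq T) : {set {set T}} :=
  [set [set x; next c x] | x in c].

Definition path_edges (p : seq T) : {set {set T}} :=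
  [set [set xy.1; xy.2] | xy in zip p (behead p)].

Definition is_cycle_seq (c : seq T) (n : nat) : Prop :=
  uniq c /\ 3 <= size c /\ size c = n.

Definition is_path_seq (p : seq T) (n : nat) : Prop :=
  uniq p /\ size p = n.+1.

Definition girth_atleast (E : {set {set T}}) (g : nat) : Prop :=
  forall d : seq T, uniq d -> 3 <= size d -> cycle_edges d \subset E ->
    g <= size d.

End Graphs.

(* Main.v *)
Require Import Defs.
From mathcomp Require Import all_boot zify.
Set Implicit Arguments. Unset Strict Implicit. Unset Printing Implicit Defensive.

Section Aux.
Variable T : finType.
Implicit Types (s t xs ys : seq T) (x y v a b : T).

Lemma disjP (A B : {set {set T}}) :
  reflect (forall e, e \in A -> e \in B -> False) [disjoint A & B].
Proof.
apply: (iffP pred0P) => H.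
  by move=> e eA eB; have := H e; rewrite /= eA eB.
move=> e /=; apply/negbTE/negP => /andP [eA eB]; exact: H eA eB.
Qed.

Lemma path_edges_nil : path_edges [::] = set0 :> {set {set T}}.
Proof. by apply/setP => e; rewrite inE; apply/negbTE/imsetP => -[]. Qed.

Lemma path_edges1 x : path_edges [:: x] = set0.
Proof. by apply/setP => e; rewrite inE; apply/negbTE/imsetP => -[]. Qed.

Lemma path_edges_cons2 x y s :
  path_edges [:: x, y & s] = [set x; y] |: path_edges (y :: s).
Proof.
rewrite /path_edges /=.
apply/setP => e; rewrite in_setU1; apply/imsetP/idP.
  move=> [xy]; rewrite in_cons => /orP [/eqP -> -> /=|H ->]; first by rewrite eqxx.
  by apply/orP; right; apply/imsetP; exists xy.
case/orP => [/eqP ->| /imsetP [xy H ->]]; first by exists (x, y); rewrite ?mem_head.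
by exists xy; rewrite // in_cons H orbT.
Qed.

Lemma path_edges_cons x s :
  path_edges (x :: s) = path_edges s :|: (if s is y :: _ then [set [set x; y]] else set0).
Proof.
case: s => [|y s]; first by rewrite path_edges1 path_edges_nil setU0.
by rewrite path_edges_cons2 setUC.
Qed.

Lemma path_edges_rcons2 s a b :
  path_edges (rcons (rcons s a) b) = [set a; b] |: path_edges (rcons s a).
Proof.
elim: s => [|x s IH]; first by rewrite /= path_edges_cons2 !path_edges1.
rewrite !rcons_cons path_edges_cons IH [path_edges (x :: _)]path_edges_cons.
case: s {IH} => [|y s] /=; by rewrite setUA.
Qed.

Lemma path_edges_rev s : path_edges (rev s) = path_edges s.
Proof.
elim: s => [|x [|y s] IH] //.
rewrite rev_cons [rev (y :: s)]rev_cons path_edges_rcons2 -rev_cons IH.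
by rewrite path_edges_cons2 [[set y; x]]setUC.
Qed.

Lemma path_edges_catl s t : path_edges s \subset path_edges (s ++ t).
Proof.
elim: s => [|x s IH]; first by rewrite path_edges_nil sub0set.
rewrite /= !path_edges_cons; apply: setUSS => //.
by case: s {IH} => [|y s] /=; [rewrite sub0set|].
Qed.

Lemma path_edges_catr s t : path_edges t \subset path_edges (s ++ t).
Proof.
elim: s => [|x s IH] //=.
by rewrite path_edges_cons; apply: subset_trans IH (subsetUl _ _).
Qed.


Lemma zip_cycle x s : uniq (x :: s) ->
  zip (x :: rcons s x) (rcons s x) = [seq (y, next (x :: s) y) | y <- x :: s].
Proof.
move=> U.
apply: (eq_from_nth (x0 := (x, x))).
  by rewrite size_zip size_map [size (_ :: _)]/= size_rcons (minn_idPr (leqnSn _)).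
move=> i Hi; rewrite nth_zip_cond Hi.
move: Hi; rewrite size_zip [size (_ :: _)]/= size_rcons (minn_idPr (leqnSn _)) => Hi.
rewrite (nth_map x) // next_nth mem_nth // index_uniq //.
rewrite -rcons_cons !nth_rcons /= Hi.
by case: i Hi => [|i] Hi /=; rewrite if_same; case: ltnP => H //; rewrite (nth_default _ H).
Qed.

Lemma cycle_path x s : uniq (x :: s) ->
  cycle_edges (x :: s) = path_edges (x :: rcons s x).
Proof.
move=> U; rewrite /path_edges /= zip_cycle // /cycle_edges.
apply/setP => e; apply/imsetP/imsetP.
  by move=> [y Hy ->]; exists (y, next (x :: s) y) => //; apply: map_f.
by move=> [z /mapP [y Hy ->] ->]; exists y.
Qed.

Lemma cycle_rot n s : uniq s -> cycle_edges (rot n s) = cycle_edges s.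
Proof.
move=> U; rewrite /cycle_edges; apply/setP => e; apply/imsetP/imsetP.
  by move=> [y Hy ->]; exists y; [rewrite -(mem_rot n)| rewrite next_rot].
by move=> [y Hy ->]; exists y; [rewrite mem_rot| rewrite next_rot].
Qed.

Lemma mem_zip2 (s t : seq T) a b : (a, b) \in zip s t -> (a \in s) && (b \in t).
Proof.
elim: s t => [|x s IH] [|y t] //=; rewrite !in_cons => /orP [/eqP [-> ->]|H].
  by rewrite !eqxx.
by case/andP: (IH _ H) => -> ->; rewrite !orbT.
Qed.

Lemma zip_index p a b : uniq p -> (a, b) \in zip p (behead p) ->
  index b p = (index a p).+1.
Proof.
elim: p => [|x [|y s] IH] // Up H.
have /andP [nx U] : (x \notin y :: s) && uniq (y :: s) := Up.
move: H; rewrite [zip _ _]/= in_cons => /orP [/eqP [-> ->]|H].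
  have xy : (x == y) = false by apply/negbTE; apply: contraNneq nx => ->; rewrite mem_head.
  by rewrite /= xy !eqxx.
have /andP [aI bI] := mem_zip2 H.
have xb : (x == b) = false by apply/negP => /eqP E; move: nx; rewrite E in_cons bI orbT.
have xa : (x == a) = false by apply/negP => /eqP E; move: nx; rewrite E aI.
rewrite -[index b _]/(if x == b then 0 else (index b (y :: s)).+1).
rewrite -[index a (x :: _)]/(if x == a then 0 else (index a (y :: s)).+1).
by rewrite xa xb (IH U H).
Qed.

Lemma edge_ends x y p : uniq (x :: rcons p y) -> 0 < size p ->
  [set x; y] \notin path_edges (x :: rcons p y).
Proof.
move=> U Hp; apply/negP => /imsetP [[a b] H /= E].
have I := zip_index U H.
have aE : a \in [set x; y] by rewrite E set21.
have bE : b \in [set x; y] by rewrite E set22.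
have ix : index x (x :: rcons p y) = 0 by rewrite /= eqxx.
have iy : index y (x :: rcons p y) = (size p).+1.
  move: U => /= /andP [nx U]; rewrite ifN; last first.
    by apply: contraNneq nx => ->; rewrite mem_rcons mem_head.
  by rewrite -cats1 index_cat ifN ?(rcons_uniq) //= ?eqxx ?addn0;
     move: U; rewrite rcons_uniq => /andP [].
move: aE bE I => /set2P [] -> /set2P [] ->; rewrite ?ix ?iy //; lia.
Qed.

Lemma key (E : {set {set T}}) (k : nat) v x ys :
  3 <= k -> uniq (v :: ys) -> size ys = (2 * k).-1 ->
  path_edges (v :: rcons ys v) \subset E -> [set v; x] \in E ->
  [set v; x] \notin path_edges (v :: rcons ys v) ->
  girth_atleast E (2 * k - 2) -> x \in ys -> x = nth v ys 2.
Proof.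
move=> k3 U sz sub vxE vxN G xin.
have /andP [nv Uy] : (v \notin ys) && uniq ys := U.
set i := index x ys.
have ilt : i < size ys by rewrite index_mem.
have xi : nth v ys i = x by rewrite nth_index.
have Cwhole : forall s t, s ++ t = v :: rcons ys v ->
    path_edges s \subset E /\ path_edges t \subset E.
  move=> s t Est; split; apply: subset_trans sub; rewrite -Est;
    [exact: path_edges_catl | exact: path_edges_catr].
have tk : take i.+1 ys = rcons (take i ys) x by rewrite (take_nth v) // xi.
have i1 : 0 < i.
  case: (posnP i) => // i0; exfalso; move/negP: vxN; apply.
  move: xi; rewrite i0; case Ey: ys => [|y ys'] /=; first by rewrite Ey in ilt.
  by move=> ->; rewrite path_edges_cons2 setU11.
have d1U : uniq (v :: take i.+1 ys).
  by rewrite /= take_uniq // andbT; apply: contra nv; apply: mem_take.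
have d1E : cycle_edges (v :: take i.+1 ys) \subset E.
  rewrite cycle_path // tk -!rcons_cons path_edges_rcons2 subUset sub1set.
  rewrite [[set x; v]]setUC vxE /=.
  have [S1 _] := Cwhole (v :: take i.+1 ys) (rcons (drop i.+1 ys) v)
    (ltac:(by rewrite -rcons_cat /= cat_take_drop)).
  by rewrite -tk.
have d1s : size (v :: take i.+1 ys) = i.+2 by rewrite /= size_takel.
have G1 := G _ d1U (ltac:(by rewrite d1s)) d1E; rewrite d1s in G1.
have dn : drop i ys = x :: drop i.+1 ys by rewrite (drop_nth v) // xi.
have d2U : uniq (v :: drop i ys).
  by rewrite /= drop_uniq // andbT; apply: contra nv; apply: mem_drop.
have [S2 S3] := Cwhole (v :: take i ys) (rcons (drop i ys) v)
  (ltac:(by rewrite -rcons_cat /= cat_take_drop)).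
have d2E : cycle_edges (v :: drop i ys) \subset E.
  by rewrite cycle_path // dn path_edges_cons2 subUset sub1set vxE -rcons_cons -dn.
have d2s : 2 < size (v :: drop i ys).
  rewrite dn /=; case Ed: (drop i.+1 ys) => [|z t] //=.
  exfalso; move/negP: vxN; apply.
  have H := path_edges_catr (v :: take i ys) (rcons (drop i ys) v).
  rewrite -rcons_cat cat_cons cat_take_drop in H.
  apply: (subsetP H); rewrite dn Ed /= path_edges_cons2.
  by rewrite in_setU1 [[set v; x]]setUC eqxx.
have G2 := G _ d2U (ltac:(by [])) d2E.
move: d2s G2; rewrite /= size_drop sz => d2s G2.
have i2 : i = 2 by lia.
by rewrite -xi i2.
Qed.

Lemma set2C (a b : T) : [set a; b] = [set b; a].
Proof. by rewrite setUC. Qed.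

Lemma uniq_p v x1 y1 xs : uniq (v :: x1 :: xs) -> y1 \notin x1 :: xs -> y1 != v ->
  uniq (rcons (rcons (x1 :: xs) v) y1).
Proof.
move=> U ny nv; have /andP [vn U'] : (v \notin x1 :: xs) && uniq (x1 :: xs) := U.
by rewrite !rcons_uniq mem_rcons in_cons negb_or nv ny vn U'.
Qed.

Lemma construct v x1 y1 xs ys :
  uniq (v :: x1 :: xs) -> uniq (v :: y1 :: ys) ->
  x1 \notin y1 :: ys -> y1 \notin x1 :: xs -> 0 < size xs -> 0 < size ys ->
  [disjoint path_edges (v :: x1 :: rcons xs v) & path_edges (v :: y1 :: rcons ys v)] ->
  [/\ uniq (rcons (rcons (x1 :: xs) v) y1), uniq (rcons (rcons (y1 :: ys) v) x1),
   [disjoint path_edges (rcons (rcons (x1 :: xs) v) y1) &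
             path_edges (rcons (rcons (y1 :: ys) v) x1)] &
   path_edges (rcons (rcons (x1 :: xs) v) y1) :|: path_edges (rcons (rcons (y1 :: ys) v) x1)
   = path_edges (v :: x1 :: rcons xs v) :|: path_edges (v :: y1 :: rcons ys v)].
Proof.
move=> Ux Uy nx ny sx sy D.
have vx : x1 != v by move: Ux; rewrite /= in_cons negb_or eq_sym => /andP [/andP []].
have vy : y1 != v by move: Uy; rewrite /= in_cons negb_or eq_sym => /andP [/andP []].
have Ax : [set v; x1] \notin path_edges (x1 :: rcons xs v).
  rewrite [[set v; x1]]setUC; apply: edge_ends => //.
  by rewrite -rcons_cons rcons_uniq; exact: Ux.
have Ay : [set v; y1] \notin path_edges (y1 :: rcons ys v).
  rewrite [[set v; y1]]setUC; apply: edge_ends => //.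
  by rewrite -rcons_cons rcons_uniq; exact: Uy.
rewrite !path_edges_rcons2 !rcons_cons !path_edges_cons2 in D *.
split; [exact: uniq_p | exact: uniq_p | |].
  move/disjP: D => D.
  apply/disjP => e; rewrite !in_setU1 => /orP [/eqP ->|eA] /orP [/eqP E|eB].
  - by apply: (D [set v; x1]); rewrite in_setU1 ?eqxx // -E eqxx.
  - by rewrite eB in Ay.
  - by move: eA; rewrite E (negbTE Ax).
  - by apply: (D e); rewrite in_setU1 ?eA ?eB orbT.
apply/setP => e; rewrite !(in_setU, in_set1).
by case: (e == [set v; x1]); case: (e == [set v; y1]); case: (e \in path_edges (x1 :: rcons xs v)); case: (e \in path_edges (y1 :: rcons ys v)).
Qed.

Lemma pick (E : {set {set T}}) k v xs ys :
  3 <= k -> uniq (v :: xs) -> uniq (v :: ys) -> size xs = (2 * k).-1 ->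
  size ys = (2 * k).-1 ->
  path_edges (v :: rcons xs v) \subset E -> path_edges (v :: rcons ys v) \subset E ->
  [disjoint path_edges (v :: rcons xs v) & path_edges (v :: rcons ys v)] ->
  girth_atleast E (2 * k - 2) ->
  exists x1 xs2, [/\ uniq (v :: x1 :: xs2), size xs2 = (2 * k).-2,
     path_edges (v :: x1 :: rcons xs2 v) = path_edges (v :: rcons xs v),
     x1 \notin ys & x1 :: xs2 =i xs].
Proof.
move=> k3 Ux Uy szx szy subX subY D G.
have Hn : forall x s, uniq (v :: x :: s) ->
    path_edges (v :: x :: rcons s v) = path_edges (v :: rcons xs v) ->
    x \in ys -> x = nth v ys 2.
  move=> x s Us Es xin.
  have xE : [set v; x] \in path_edges (v :: rcons xs v) by rewrite -Es path_edges_cons2 setU11.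
  apply: (key k3 Uy szy subY _ _ G xin); first exact: (subsetP subX).
  by apply/negP => H; move/disjP: D; apply; [exact: xE | exact: H].
have Erev : path_edges (v :: rcons (rev xs) v) = path_edges (v :: rcons xs v).
  by rewrite -path_edges_rev rev_cons rev_rcons rcons_cons revK.
have Urev : uniq (v :: rev xs) by rewrite /= mem_rev rev_uniq.
have szr : size (rev xs) = (2 * k).-1 by rewrite size_rev.
have [x1 [xs1 Exs]] : exists x1 xs1, xs = x1 :: xs1.
  by case: (xs) szx => [|a s] /=; [lia | exists a, s].
have [xl [r Er]] : exists xl r, rev xs = xl :: r.
  by case: (rev xs) szr => [|a s] /=; [lia | exists a, s].
have ex1 : path_edges (v :: x1 :: rcons xs1 v) = path_edges (v :: rcons xs v) by rewrite Exs.
have ux1 : uniq (v :: x1 :: xs1) by rewrite -Exs.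
have exl : path_edges (v :: xl :: rcons r v) = path_edges (v :: rcons xs v).
  by rewrite -[xl :: rcons r v]/(rcons (xl :: r) v) -Er Erev.
have uxl : uniq (v :: xl :: r) by rewrite -Er.
case: (boolP (x1 \in ys)) => h1; last first.
  exists x1, xs1; split => //; first by move: szx; rewrite Exs /=; lia.
  by rewrite Exs.
case: (boolP (xl \in ys)) => h2; last first.
  exists xl, r; split => //; first by move: szr; rewrite Er /=; lia.
  by move=> z; rewrite -Er mem_rev.
exfalso.
have e12 : x1 = xl by rewrite (Hn _ _ ux1 ex1 h1) (Hn _ _ uxl exl h2).
have Exs' : xs = rcons (rev r) xl by rewrite -rev_cons -Er revK.
move: Ux; rewrite Exs' -e12; case Erv: (rev r) => [|a m].
  by move: szx; rewrite Exs' Erv /=; lia.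
move: Exs; rewrite Exs' Erv rcons_cons => -[Ea _].
by rewrite Ea /= mem_rcons mem_head /= andbF.
Qed.

Lemma norm c v : uniq c -> v \in c -> exists xs,
  [/\ uniq (v :: xs), size xs = (size c).-1 & cycle_edges c = path_edges (v :: rcons xs v)].
Proof.
move=> Uc vc; have R := rot_index vc.
exists (drop (index v c).+1 c ++ take (index v c) c).
have U : uniq (v :: (drop (index v c).+1 c ++ take (index v c) c)) by rewrite -R rot_uniq.
split => //.
  by have := size_rot (index v c) c; rewrite R /= => <-.
by rewrite -(cycle_rot (index v c) Uc) R cycle_path.
Qed.
End Aux.

Unset Implicit Arguments.
Set Strict Implicit.

Theorem mainTheorem10 (T : finType) (k : nat) (c c' : seq T) :
  3 <= k ->
  is_cycle_seq c (2 * k) -> is_cycle_seq c' (2 * k) ->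
  [disjoint cycle_edges c & cycle_edges c'] ->
  (exists v, v \in c /\ v \in c') ->
  girth_atleast (cycle_edges c :|: cycle_edges c') (2 * k - 2) ->
  exists p1 p2 : seq T,
    is_path_seq p1 (2 * k) /\ is_path_seq p2 (2 * k) /\
    [disjoint path_edges p1 & path_edges p2] /\
    path_edges p1 :|: path_edges p2 = cycle_edges c :|: cycle_edges c'.
Proof.
move=> k3 [Uc [_ sc]] [Uc' [_ sc']] D [v [vc vc']] G.
have [xs [Ux szx Ec]] := norm Uc vc.
have [ys [Uy szy Ec']] := norm Uc' vc'.
rewrite sc in szx; rewrite sc' in szy.
rewrite Ec Ec' in D G *.
have [x1 [xs2 [Ux2 szx2 Ex2 nx Mx]]] :=
  pick k3 Ux Uy szx szy (subsetUl _ _) (subsetUr _ _) D G.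
have [y1 [ys2 [Uy2 szy2 Ey2 ny My]]] :=
  pick k3 Uy Ux szy szx (subsetUr _ _) (subsetUl _ _) (ltac:(by rewrite disjoint_sym)) G.
have nx' : x1 \notin y1 :: ys2 by rewrite My.
have ny' : y1 \notin x1 :: xs2 by rewrite Mx.
have D' : [disjoint path_edges (v :: x1 :: rcons xs2 v) & path_edges (v :: y1 :: rcons ys2 v)].
  by rewrite Ex2 Ey2.
have sx : 0 < size xs2 by rewrite szx2; move: k3; clear; lia.
have sy : 0 < size ys2 by rewrite szy2; move: k3; clear; lia.
have [U1 U2 D2 E2] := construct Ux2 Uy2 nx' ny' sx sy D'.
exists (rcons (rcons (x1 :: xs2) v) y1), (rcons (rcons (y1 :: ys2) v) x1).
have s1 : ((2 * k).-2).+3 = (2 * k).+1 by move: k3; clear; lia.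
rewrite /is_path_seq !size_rcons /= E2 Ex2 Ey2 szx2 szy2 s1.
by do !split.
Qed.
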